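(* Let $G$ be a finite graph and let $\mathcal{B}$ be a set of closed neighborhoods in $G$. Suppose $G$ has four pairwise false twins $u_1,u_2,u_3,u_4$ (i.e. $N(u_i)=N(u_j)$ for all $i,j$) with $N[u_1],\ldots,N[u_4]\in\mathcal{B}$. Then for any non-clashing teaching map $T$ of size $1$ for $\mathcal{B}$, there exists $i\in\{1,2,3,4\}$ such that $T(N[u_i])=\{u_i\}$.
   Context: For a vertex $v$, $N(v)$ is its open neighborhood and $N[v]=N(v)\cup\{v\}$ its closed neighborhood. A teaching map for a set $\mathcal{B}$ of closed neighborhoods assigns to each $B\in\mathcal{B}$ a set $T(B)\subseteq V(G)$ (the examples, each labeled by membership in $B$). A vertex $w$ distinguishes $B,B'$ if $w\in (B\cup B')\setminus(B\cap B')$. $T$ is non-clashing if for all distinct $B,B'\in\mathcal{B}$ some $w\in T(B)\cup T(B')$ distinguishes $B$ and $B'$. The size of $T$ is $\max_{B\in\mathcal{B}}|T(B)|$. *)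

(* Defs.v *)
From mathcomp Require Import all_boot.
Set Implicit Arguments. Unset Strict Implicit. Unset Printing Implicit Defensive.

Definition simple_graph (V : finType) (e : rel V) : Prop :=
  symmetric e /\ irreflexive e.

Definition Nopen (V : finType) (e : rel V) (v : V) : {set V} := [set w | e v w].
Definition Nclosed (V : finType) (e : rel V) (v : V) : {set V} := v |: Nopen e v.

Definition distinguishes (V : finType) (w : V) (B B' : {set V}) : bool :=
  w \in (B :|: B') :\: (B :&: B').

Definition non_clashing (V : finType) (BB : {set {set V}})
    (T : {set V} -> {set V}) : Prop :=
  forall B B', B \in BB -> B' \in BB -> B != B' ->
    exists2 w, w \in T B :|: T B' & distinguishes w B B'.

Definition teaching_size (V : finType) (BB : {set {set V}})
    (T : {set V} -> {set V}) : nat :=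
  \max_(B in BB) #|T B|.

(* Main.v *)
Require Import Defs.
From mathcomp Require Import all_boot.
From mathcomp Require Import zify.

Lemma pairs4 (h : 'I_4 -> nat) :
  (forall i j : 'I_4, i != j -> h i = j \/ h j = i) -> False.
Proof.
move=> H.
have H01 := H (@Ordinal 4 0 isT) (@Ordinal 4 1 isT) isT.
have H02 := H (@Ordinal 4 0 isT) (@Ordinal 4 2 isT) isT.
have H03 := H (@Ordinal 4 0 isT) (@Ordinal 4 3 isT) isT.
have H12 := H (@Ordinal 4 1 isT) (@Ordinal 4 2 isT) isT.
have H13 := H (@Ordinal 4 1 isT) (@Ordinal 4 3 isT) isT.
have H23 := H (@Ordinal 4 2 isT) (@Ordinal 4 3 isT) isT.
move: H01 H02 H03 H12 H13 H23 => /=.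
set a := h _; set b := h _; set c := h _; set d := h _.
lia.
Qed.

Theorem lemma1 (V : finType) (e : rel V) (BB : {set {set V}})
    (u : 'I_4 -> V) :
  simple_graph e ->
  (forall B, B \in BB -> exists v, B = Nclosed e v) ->
  injective u ->
  (forall i j, Nopen e (u i) = Nopen e (u j)) ->
  (forall i, Nclosed e (u i) \in BB) ->
  forall T : {set V} -> {set V},
    non_clashing BB T -> teaching_size BB T = 1 ->
    exists i : 'I_4, T (Nclosed e (u i)) = [set u i].
Proof.
move=> [_ irr] _ inju tw inBB T nc ts.
have notN : forall i j, u i \notin Nopen e (u j).
  by move=> i j; rewrite -(tw i j) /Nopen inE irr.
have card1 : forall i, #|T (Nclosed e (u i))| <= 1.
  move=> i; rewrite -ts /teaching_size.
  by rewrite (bigD1 _ (inBB i)) /= leq_maxl.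
have inB : forall i j, (u i \in Nclosed e (u j)) = (i == j).
  move=> i j; rewrite /Nclosed in_setU1 (negbTE (notN i j)) orbF.
  by rewrite (inj_eq inju).
case: (pickP [pred i | T (Nclosed e (u i)) == [set u i]]) => [i /eqP Hi|Hn]; first by exists i.
have notT : forall i, u i \notin T (Nclosed e (u i)).
  move=> i; apply/negP => Hi; have := Hn i.
  by rewrite /= eq_sym eqEcard sub1set Hi cards1 card1.
have uniq1 : forall i j k, u j \in T (Nclosed e (u i)) ->
    u k \in T (Nclosed e (u i)) -> j = k.
  move=> i j k Hj Hk; apply: inju.
  have := card1 i; rewrite leq_eqVlt ltnS leqn0 => /orP[/cards1P[x Hx]|/eqP/cards0_eq H0].
    by move: Hj Hk; rewrite Hx !inE => /eqP -> /eqP ->.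
  by move: Hj; rewrite H0 inE.
pose g i := [pick j | u j \in T (Nclosed e (u i))].
pose h i := odflt 4 (omap (@nat_of_ord 4) (g i)).
have hP : forall i j, u j \in T (Nclosed e (u i)) -> h i = j.
  move=> i j Hj; rewrite /h /g; case: pickP => [k Hk|/(_ j)]; last by rewrite Hj.
  by rewrite /= (uniq1 _ _ _ Hk Hj).
exfalso; apply: (@pairs4 h) => i j ij.
have Bne : Nclosed e (u i) != Nclosed e (u j).
  apply/negP => /eqP E.
  by move: (inB i i); rewrite E inB eqxx (negbTE ij).
have [w wT wd] := nc _ _ (inBB i) (inBB j) Bne.
move: wd; rewrite /distinguishes inE => /andP[wI wU].
have wuv : (w == u i) || (w == u j).
  move: wI wU; rewrite /Nclosed -(tw i j) !inE.
  by case: (w == u i); case: (w == u j) => //=; case: (e (u i) w).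
case/orP: wuv => /eqP Ew; move: wT; rewrite Ew inE => /orP[] H.
- by rewrite (negbTE (notT i)) in H.
- by right; apply: hP.
- by left; apply: hP.
- by rewrite (negbTE (notT j)) in H.
Qed.
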